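(* For every 3-periodic $P_1P_2P_3$ of $\mathcal{E}$, let $A_1^\dagger$ and $A_2^\dagger$ be the areas of its $f_1$-inversive and $f_2$-inversive triangles. Then \[A_1^\dagger A_2^\dagger=\frac{\rho^8}{8a^8b^2}\left[(a^4+2a^2b^2+4b^4)\delta+a^6+\tfrac32 a^4b^2+4b^6\right],\] which is independent of the 3-periodic.
   Context: Let $a>b>0$ and let $\mathcal{E}$ be the ellipse $x^2/a^2+y^2/b^2=1$. Set $c=\sqrt{a^2-b^2}$, $\delta=\sqrt{a^4-a^2b^2+b^4}$, and let the foci be $f_1=(-c,0)$, $f_2=(c,0)$. A 3-periodic is a triangle $P_1P_2P_3$ with vertices on $\mathcal{E}$ such that at each vertex the normal to $\mathcal{E}$ bisects the angle formed by the two sides meeting at that vertex; these form a one-parameter family (one through every point of $\mathcal{E}$). Fix $\rho>0$. For $j=1,2$, the $f_j$-inversive triangle of $P_1P_2P_3$ has vertices $P_{j,i}^\dagger=f_j+(\rho/d_{j,i})^2(P_i-f_j)$, where $d_{j,i}=|P_i-f_j|$ (inversion in the circle of radius $\rho$ centered at $f_j$). *)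

(* Defs.v *)
From Stdlib Require Import Reals.
Open Scope R_scope.

Definition pt := (R * R)%type.

Definition padd (p q : pt) : pt := (fst p + fst q, snd p + snd q).
Definition psub (p q : pt) : pt := (fst p - fst q, snd p - snd q).
Definition pscale (k : R) (p : pt) : pt := (k * fst p, k * snd p).
Definition dot (p q : pt) : R := fst p * fst q + snd p * snd q.
Definition cross (p q : pt) : R := fst p * snd q - snd p * fst q.
Definition dist (p q : pt) : R := sqrt (dot (psub p q) (psub p q)).

Definition on_ellipse (a b : R) (p : pt) : Prop :=
  (fst p)^2 / a^2 + (snd p)^2 / b^2 = 1.

Definition ell_normal (a b : R) (p : pt) : pt := (fst p / a^2, snd p / b^2).

(* the normal at P makes equal angles with the sides PQ and PR,
   i.e. it bisects the angle QPR: cos(n, PQ) = cos(n, PR). *)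
Definition normal_bisects (a b : R) (P Q S : pt) : Prop :=
  dot (ell_normal a b P) (psub Q P) / dist Q P
  = dot (ell_normal a b P) (psub S P) / dist S P.

Definition three_periodic (a b : R) (P1 P2 P3 : pt) : Prop :=
  P1 <> P2 /\ P2 <> P3 /\ P3 <> P1 /\
  on_ellipse a b P1 /\ on_ellipse a b P2 /\ on_ellipse a b P3 /\
  normal_bisects a b P1 P3 P2 /\
  normal_bisects a b P2 P1 P3 /\
  normal_bisects a b P3 P2 P1.

Definition focus1 (a b : R) : pt := (- sqrt (a^2 - b^2), 0).
Definition focus2 (a b : R) : pt := (sqrt (a^2 - b^2), 0).

Definition invert (rho : R) (f P : pt) : pt :=
  padd f (pscale ((rho / dist P f)^2) (psub P f)).

Definition tri_area (A B C : pt) : R := Rabs (cross (psub B A) (psub C A)) / 2.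

Definition inversive_area (rho : R) (f P1 P2 P3 : pt) : R :=
  tri_area (invert rho f P1) (invert rho f P2) (invert rho f P3).

(* Main.v *)
Require Import Defs.
From Stdlib Require Import Reals Lra Field.
Open Scope R_scope.

Definition gg (A2 C t : R) := (A2 - C) + 2*(A2 + C)*t^2 + (A2 - C)*t^4.
Definition Ghat (A2 C e1 e2 : R) :=
  (A2 - C)^2 + (A2 - C)*(2*(A2+C))*(e1^2 - 2*e2) + (A2 - C)^2*((e1^2 - 2*e2)^2 - 2*e2^2)
  + (2*(A2+C))^2*e2^2 + (A2 - C)*(2*(A2+C))*e2^2*(e1^2 - 2*e2) + (A2 - C)^2*(e2^2)^2.
Definition MMf (A2 C s1 s2 s3 : R) :=
  (- 64*C^3 + 144*A2*C^2 - 96*A2^2*C + 16*A2^3 + 128*s3^2*C^3 + 288*s3^2*A2*C^2 - 192*s3^2*A2^2*C + 32*s3^2*A2^3 - 64*s3^4*C^3 + 144*s3^4*A2*C^2 - 96*s3^4*A2^2*C + 16*s3^4*A2^3 + 128*s2*C^3 - 384*s2*A2*C^2 + 320*s2*A2^2*C - 64*s2*A2^3 - 128*s2*s3^2*C^3 - 384*s2*s3^2*A2*C^2 + 320*s2*s3^2*A2^2*C - 64*s2*s3^2*A2^3 - 64*s2^2*C^3 + 352*s2^2*A2*C^2 - 384*s2^2*A2^2*C + 96*s2^2*A2^3 + 96*s2^2*s3^2*A2*C^2 - 128*s2^2*s3^2*A2^2*C + 32*s2^2*s3^2*A2^3 - 128*s2^3*A2*C^2 + 192*s2^3*A2^2*C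 - 64*s2^3*A2^3 + 16*s2^4*A2*C^2 - 32*s2^4*A2^2*C + 16*s2^4*A2^3 - 128*s1*s3*C^3 - 384*s1*s3*A2*C^2 + 320*s1*s3*A2^2*C - 64*s1*s3*A2^3 + 128*s1*s3^3*C^3 - 384*s1*s3^3*A2*C^2 + 320*s1*s3^3*A2^2*C - 64*s1*s3^3*A2^3 + 128*s1*s2*s3*C^3 + 512*s1*s2*s3*A2*C^2 - 512*s1*s2*s3*A2^2*C + 128*s1*s2*s3*A2^3 - 128*s1*s2^2*s3*A2*C^2 + 192*s1*s2^2*s3*A2^2*C - 64*s1*s2^2*s3*A2^3 + 96*s1^2*A2*C^2 - 128*s1^2*A2^2*C + 32*s1^2*A2^3 - 64*s1^2*s3^2*C^3 + 352*s1^2*s3^2*A2*C^2 - 384*s1^2*s3^2*A2^2*C + 96*s1^2*s3^2*A2^3 - 128*s1^2*s2*A2*C^2 + 192*s1^2*s2*A2^2*C - 64*s1^2*s2*A2^3 + 32*s1^2*s2^2*A2*C^2 - 64*s1^2*s2^2*A2^2*C + 32*s1^2*s2^2*A2^3 - 128*s1^3*s3*A2*C^2 + 192*s1^3*s3*A2^2*C - 64*s1^3*s3*A2^3 + 16*s1^4*A2*C^2 - 32*s1^4*A2^2*C + 16*s1^4*A2^3).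
Definition Kf (A2 B2 dl : R) :=
  (A2^2 + 2*A2*B2 + 4*B2^2)*dl + A2^3 + 3/2*A2^2*B2 + 4*B2^3.

Lemma final_id (CC u t2 A2 e1 e2 : R) :
  2*u-1 <> 0 -> 1-u <> 0 -> (u-1) + (u+1)*t2^2 <> 0 ->
  A2 = CC*u*(2-u)/(2*u-1) ->
  e1 = - (4*u*t2) / ((1-u)*((u-1) + (u+1)*t2^2)) ->
  e2 = ((1-u)*((u+1) + (u-1)*t2^2)) / ((1-u)*((u-1) + (u+1)*t2^2)) ->
  2*A2^4*(A2-CC)^2*(e1^2-4*e2)*(e2 - t2*e1 + t2^2)^2*MMf A2 CC (t2+e1) (e2+t2*e1) (t2*e2)
  = Kf A2 (A2-CC) ((A2-CC)+u*CC) * (gg A2 CC t2 * Ghat A2 CC e1 e2)^2.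
Proof.
  intros H1 H2 H3 -> -> ->. unfold Kf, gg, Ghat, MMf.
  field. repeat split; auto.
Qed.

Definition Tf (a s X1 Y1 X2 Y2 X3 Y3 : R) :=
 (a - s*X3)^2*(a*(X1*Y2 - X2*Y1) - s*(Y2 - Y1)) + (a - s*X1)^2*(a*(X2*Y3 - X3*Y2) - s*(Y3-Y2))
 + (a - s*X2)^2*(a*(X3*Y1 - X1*Y3) - s*(Y1 - Y3)).
Definition Mf (a s s1 s2 s3 : R) := 4*(a-s)^2*(a+2*s) + 4*a*(a^2-s^2)*(s1^2-2*s2) + 8*s^2*(a-s)*s2
  + 4*a*(a^2-s^2)*(s2^2-2*s1*s3) + 8*s^2*(a+s)*s1*s3 + 4*(a+s)^2*(a-2*s)*s3^2.
Definition cx (t : R) := (1-t^2)/(1+t^2).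
Definition cy (t : R) := 2*t/(1+t^2).

Lemma onept_pos (t : R) : 1 + t^2 <> 0.
Proof. nra. Qed.

Lemma T_param (a s t1 t2 t3 : R) :
  Tf a s (cx t1) (cy t1) (cx t2) (cy t2) (cx t3) (cy t3) =
  (t1-t2)*(t2-t3)*(t3-t1)*Mf a s (t1+t2+t3) (t1*t2+t2*t3+t3*t1) (t1*t2*t3)
  / ((1+t1^2)^2*(1+t2^2)^2*(1+t3^2)^2).
Proof.
  unfold Tf, Mf, cx, cy. field.
  repeat split; apply onept_pos.
Qed.

Lemma MM_id (a c s1 s2 s3 : R) :
  Mf a c s1 s2 s3 * Mf a (-c) s1 s2 s3 = MMf (a^2) (c^2) s1 s2 s3.
Proof. unfold Mf, MMf. ring. Qed.

Lemma g_param (a c t : R) : a^2 - c^2*(cx t)^2 = gg (a^2) (c^2) t / (1+t^2)^2.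
Proof. unfold cx, gg. field. apply onept_pos. Qed.

Lemma Ghat_id (A2 C t1 t3 : R) : gg A2 C t1 * gg A2 C t3 = Ghat A2 C (t1+t3) (t1*t3).
Proof. unfold gg, Ghat. ring. Qed.

Lemma key_tt (a c u t1 t2 t3 : R) :
  0 < a -> 0 < c -> u <> 0 -> 2*u-1 <> 0 -> 1-u <> 0 ->
  a^2 = c^2*u*(2-u)/(2*u-1) ->
  u*(1-u) + (1-u)*(cx t1*cx t2) + u*(cy t1*cy t2) = 0 ->
  u*(1-u) + (1-u)*(cx t2*cx t3) + u*(cy t2*cy t3) = 0 ->
  t1 <> t3 ->
  2*a^8*(a^2-c^2)^2 * Tf a c (cx t1) (cy t1) (cx t2) (cy t2) (cx t3) (cy t3)
    * Tf a (-c) (cx t1) (cy t1) (cx t2) (cy t2) (cx t3) (cy t3)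
  = Kf (a^2) (a^2-c^2) ((a^2-c^2)+u*c^2) *
    ((a^2-c^2*(cx t1)^2)*(a^2-c^2*(cx t2)^2)*(a^2-c^2*(cx t3)^2))^2.
Proof.
  intros Ha Hc Hu0 Hu1 Hu2 Ha2 R12 R23 H13.
  set (c2 := (1-u)*((u-1)+(u+1)*t2^2)).
  set (c1 := 4*u*t2).
  set (c0 := (1-u)*((u+1)+(u-1)*t2^2)).
  assert (Q1 : c2*t1^2 + c1*t1 + c0 = 0).
  { replace (c2*t1^2 + c1*t1 + c0) with
      ((u*(1-u) + (1-u)*(cx t1*cx t2) + u*(cy t1*cy t2))*((1+t1^2)*(1+t2^2))).
    rewrite R12; ring. unfold cx, cy, c2, c1, c0. field. split; apply onept_pos. }
  assert (Q3 : c2*t3^2 + c1*t3 + c0 = 0).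
  { replace (c2*t3^2 + c1*t3 + c0) with
      ((u*(1-u) + (1-u)*(cx t2*cx t3) + u*(cy t2*cy t3))*((1+t2^2)*(1+t3^2))).
    rewrite R23; ring. unfold cx, cy, c2, c1, c0. field. split; apply onept_pos. }
  assert (Hd : t1 - t3 <> 0) by lra.
  assert (E1 : c2*(t1+t3) = - c1).
  { assert (H : (t1-t3)*(c2*(t1+t3)+c1) = 0).
    { replace ((t1-t3)*(c2*(t1+t3)+c1)) with ((c2*t1^2 + c1*t1 + c0) - (c2*t3^2 + c1*t3 + c0)) by ring.
      rewrite Q1, Q3; ring. }
    apply Rmult_integral in H. destruct H as [H|H]; [contradiction|lra]. }
  assert (E2 : c2*(t1*t3) = c0).
  { assert (H : (t1-t3)*(c2*(t1*t3)-c0) = 0).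
    { replace ((t1-t3)*(c2*(t1*t3)-c0)) with (t3*(c2*t1^2 + c1*t1 + c0) - t1*(c2*t3^2 + c1*t3 + c0)) by ring.
      rewrite Q1, Q3; ring. }
    apply Rmult_integral in H. destruct H as [H|H]; [contradiction|lra]. }
  assert (H3 : (u-1)+(u+1)*t2^2 <> 0).
  { intro H0. assert (Hc2 : c2 = 0) by (unfold c2; rewrite H0; ring).
    rewrite Hc2 in E1. assert (Ht2 : t2 = 0).
    { unfold c1 in E1. apply (Rmult_eq_reg_l (4*u)); [lra| ]. apply Rmult_integral_contrapositive_currified; lra. }
    rewrite Ht2 in H0. apply Hu2. lra. }
  assert (Hc2 : c2 <> 0) by (unfold c2; apply Rmult_integral_contrapositive_currified; auto).
  assert (Ee1 : t1+t3 = - (4*u*t2) / ((1-u)*((u-1) + (u+1)*t2^2))).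
  { fold c1 c2. apply (Rmult_eq_reg_l c2); auto. rewrite E1. field. auto. }
  assert (Ee2 : t1*t3 = ((1-u)*((u+1) + (u-1)*t2^2)) / ((1-u)*((u-1) + (u+1)*t2^2))).
  { fold c0 c2. apply (Rmult_eq_reg_l c2); auto. rewrite E2. field. auto. }
  pose proof (final_id (c^2) u t2 (a^2) (t1+t3) (t1*t3) Hu1 Hu2 H3 Ha2 Ee1 Ee2) as HF.
  rewrite !T_param, !g_param.
  replace (t2 + (t1+t3)) with (t1+t2+t3) in HF by ring.
  replace (t1*t3 + t2*(t1+t3)) with (t1*t2+t2*t3+t3*t1) in HF by ring.
  replace (t2*(t1*t3)) with (t1*t2*t3) in HF by ring.
  rewrite <- MM_id, <- Ghat_id in HF.
  assert (D1 := onept_pos t1). assert (D2 := onept_pos t2). assert (D3 := onept_pos t3).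
  apply (Rmult_eq_reg_r ((1+t1^2)^4*(1+t2^2)^4*(1+t3^2)^4)).
  2:{ apply Rmult_integral_contrapositive_currified; [apply Rmult_integral_contrapositive_currified|]; apply pow_nonzero; auto. }
  transitivity (2*(a^2)^4*(a^2-c^2)^2*((t1+t3)^2-4*(t1*t3))*((t1*t3) - t2*(t1+t3) + t2^2)^2*
        (Mf a c (t1+t2+t3) (t1*t2+t2*t3+t3*t1) (t1*t2*t3) * Mf a (-c) (t1+t2+t3) (t1*t2+t2*t3+t3*t1) (t1*t2*t3))).
  { field. auto. }
  rewrite HF. field. auto.
Qed.

Lemma sq_pos (x : R) : x <> 0 -> 0 < x^2.
Proof. intro H. destruct (Rtotal_order x 0) as [h|[h|h]]; [nra|contradiction|nra]. Qed.


Lemma dist_pos (X Y X' Y' : R) : ~(X = X' /\ Y = Y') -> 0 < (X-X')^2 + (Y-Y')^2.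
Proof.
  intro D. assert (h1 := pow2_ge_0 (X-X')). assert (h2 := pow2_ge_0 (Y-Y')).
  destruct (Req_dec X X') as [e|e].
  - assert (Y <> Y') by (intro; apply D; auto). assert (0 < (Y-Y')^2) by (apply sq_pos; lra). lra.
  - assert (0 < (X-X')^2) by (apply sq_pos; lra). lra.
Qed.
Definition detP (X1 Y1 X2 Y2 X3 Y3 : R) := X1*(Y2-Y3) - X2*(Y1-Y3) + X3*(Y1-Y2).

Lemma det_sq (X1 Y1 X2 Y2 X3 Y3 : R) :
  X1^2+Y1^2 = 1 -> X2^2+Y2^2 = 1 -> X3^2+Y3^2 = 1 ->
  4*(detP X1 Y1 X2 Y2 X3 Y3)^2 = ((X1-X2)^2+(Y1-Y2)^2)*((X2-X3)^2+(Y2-Y3)^2)*((X3-X1)^2+(Y3-Y1)^2).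
Proof.
  intros C1 C2 C3.
  assert (E : 4*(detP X1 Y1 X2 Y2 X3 Y3)^2 - ((X1-X2)^2+(Y1-Y2)^2)*((X2-X3)^2+(Y2-Y3)^2)*((X3-X1)^2+(Y3-Y1)^2)
     = (- Y3^2 - Y3^4 + 3*X3^2 - 2*X3^2*Y3^2 - X3^4 + 2*Y2*Y3 - 2*Y2*Y3^3 - 2*Y2*X3^2*Y3 - Y2^2 + 6*Y2^2*Y3^2 - 2*Y2^2*X3^2 - 2*Y2^3*Y3 - Y2^4 - 6*X2*X3 + 2*X2*X3*Y3^2 + 2*X2*X3^3 + 8*X2*Y2*X3*Y3 + 2*X2*Y2^2*X3 + 3*X2^2 - 2*X2^2*Y3^2 - 2*X2^2*X3^2 - 2*X2^2*Y2*Y3 - 2*X2^2*Y2^2 + 2*X2^3*X3 - X2^4 + 2*Y1*Y3^3 + 2*Y1*X3^2*Y3 - 2*Y1*Y2*Y3^2 + 2*Y1*Y2*X3^2 - 2*Y1*Y2^2*Y3 + 2*Y1*Y2^3 - 4*Y1*X2*X3*Y3 - 4*Y1*X2*Y2*X3 + 2*Y1*X2^2*Y3 + 2*Y1*X2^2*Y2 - Y1^2*Y3^2 - Y1^2*X3^2 + 2*Y1^2*Y2*Y3 - Y1^2*Y2^2 + 2*Y1^2*X2*X3 - Y1^2*X2^2 + 2*X1*X3*Y3^2 + 2*X1*X3^3 - 4*X1*Y2*X3*Y3 + 2*X1*Y2^2*X3 + 2*X1*X2*Y3^2 - 2*X1*X2*X3^2 - 4*X1*X2*Y2*Y3 + 2*X1*X2*Y2^2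 - 2*X1*X2^2*X3 + 2*X1*X2^3 - X1^2*Y3^2 - X1^2*X3^2 + 2*X1^2*Y2*Y3 - X1^2*Y2^2 + 2*X1^2*X2*X3 - X1^2*X2^2)*(X1^2+Y1^2-1) + (- 2 + 5*Y3^2 - Y3^4 + X3^2 - 2*X3^2*Y3^2 - X3^4 - 2*Y2*Y3 + 2*Y2*Y3^3 + 2*Y2*X3^2*Y3 - Y2^2 - Y2^2*Y3^2 - Y2^2*X3^2 + 2*X2*X3 + 2*X2*X3*Y3^2 + 2*X2*X3^3 - X2^2 - X2^2*Y3^2 - X2^2*X3^2 - 2*Y1*Y3^3 - 2*Y1*X3^2*Y3 + 2*Y1*Y2 - 2*Y1*Y2*Y3^2 + 2*Y1*Y2*X3^2 + 2*Y1*Y2^2*Y3 - 4*Y1*X2*X3*Y3 + 2*Y1*X2^2*Y3 - 4*X1*X3 + 2*X1*X3*Y3^2 + 2*X1*X3^3 - 4*X1*Y2*X3*Y3 + 2*X1*Y2^2*X3 + 2*X1*X2 + 2*X1*X2*Y3^2 - 2*X1*X2*X3^2 + 2*X1*X2^2*X3 + 8*X1*Y1*X3*Y3 - 4*X1*Y1*Y2*X3 - 4*X1*Y1*X2*Y3 + 4*X1^2 - 8*X1^2*Y3^2 + 4*X1^2*Y2*Y3 - 4*X1^2*X2*X3)*(X2^2+Y2^2-1) + (2 - 2*Y3^2 - 2*X3^2 + 4*X2*X3 - 4*X2^2 - 2*Y1*Y2 + 2*Y1*Y2*Y3^2 + 2*Y1*Y2*X3^2 - 4*Y1*X2*Y2*X3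 + 4*Y1*X2^2*Y3 + 4*X1*X3 - 2*X1*X2 + 2*X1*X2*Y3^2 + 2*X1*X2*X3^2 - 4*X1*X2*Y2*Y3 - 4*X1*X2^2*X3 - 4*X1*Y1*Y2*X3 - 4*X1*Y1*X2*Y3 + 8*X1*Y1*X2*Y2 - 4*X1^2 + 4*X1^2*Y2*Y3 - 4*X1^2*X2*X3 + 8*X1^2*X2^2)*(X3^2+Y3^2-1)).
  { unfold detP. ring. }
  rewrite C1, C2, C3 in E. lra.
Qed.

Lemma det_nz (X1 Y1 X2 Y2 X3 Y3 : R) :
  X1^2+Y1^2 = 1 -> X2^2+Y2^2 = 1 -> X3^2+Y3^2 = 1 ->
  ~(X1 = X2 /\ Y1 = Y2) -> ~(X2 = X3 /\ Y2 = Y3) -> ~(X3 = X1 /\ Y3 = Y1) ->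
  detP X1 Y1 X2 Y2 X3 Y3 <> 0.
Proof.
  intros C1 C2 C3 D12 D23 D31 H.
  pose proof (det_sq X1 Y1 X2 Y2 X3 Y3 C1 C2 C3) as E. rewrite H in E.
  assert (P12 := dist_pos X1 Y1 X2 Y2 D12).
  assert (P23 := dist_pos X2 Y2 X3 Y3 D23).
  assert (P31 := dist_pos X3 Y3 X1 Y1 D31).
  assert (0 < ((X1-X2)^2+(Y1-Y2)^2)*((X2-X3)^2+(Y2-Y3)^2)*((X3-X1)^2+(Y3-Y1)^2)).
  { apply Rmult_lt_0_compat; [apply Rmult_lt_0_compat|]; auto. }
  lra.
Qed.

Lemma cayley (X1 Y1 X2 Y2 X3 Y3 s A B : R) :
  X1^2+Y1^2 = 1 -> X2^2+Y2^2 = 1 -> X3^2+Y3^2 = 1 ->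
  s + A*(X1*X2) + B*(Y1*Y2) = 0 ->
  s + A*(X2*X3) + B*(Y2*Y3) = 0 ->
  s + A*(X3*X1) + B*(Y3*Y1) = 0 ->
  detP X1 Y1 X2 Y2 X3 Y3 <> 0 ->
  B*s + A*s - A*B = 0.
Proof.
  intros C1 C2 C3 R12 R23 R31 Hd.
  assert (E : (detP X1 Y1 X2 Y2 X3 Y3)^2 * (B*s + A*s - A*B) =
    ((s + A*X2^2 + B*Y2^2)*(s + A*X3^2 + B*Y3^2) - (s + A*(X2*X3) + B*(Y2*Y3))^2)*(X1^2+Y1^2-1)
  + ((s + A*X1^2 + B*Y1^2)*(s + A*X3^2 + B*Y3^2) - (s + A*(X3*X1) + B*(Y3*Y1))^2)*(X2^2+Y2^2-1)
  + ((s + A*X1^2 + B*Y1^2)*(s + A*X2^2 + B*Y2^2) - (s + A*(X1*X2) + B*(Y1*Y2))^2)*(X3^2+Y3^2-1)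
  + 2*(((s + A*(X3*X1) + B*(Y3*Y1))*(s + A*(X2*X3) + B*(Y2*Y3)) - (s + A*(X1*X2) + B*(Y1*Y2))*(s + A*X3^2 + B*Y3^2))*(X1*X2+Y1*Y2-1)
     + ((s + A*(X1*X2) + B*(Y1*Y2))*(s + A*(X2*X3) + B*(Y2*Y3)) - (s + A*(X3*X1) + B*(Y3*Y1))*(s + A*X2^2 + B*Y2^2))*(X1*X3+Y1*Y3-1)
     + ((s + A*(X1*X2) + B*(Y1*Y2))*(s + A*(X3*X1) + B*(Y3*Y1)) - (s + A*X1^2 + B*Y1^2)*(s + A*(X2*X3) + B*(Y2*Y3)))*(X2*X3+Y2*Y3-1))).
  { unfold detP. ring. }
  rewrite R12, R23, R31, C1, C2, C3 in E.
  assert (E' : (detP X1 Y1 X2 Y2 X3 Y3)^2 * (B*s + A*s - A*B) = 0) by (rewrite E; ring).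
  apply Rmult_integral in E'. destruct E' as [E'|E']; auto.
  exfalso. apply Hd. assert (E2 : detP X1 Y1 X2 Y2 X3 Y3 * detP X1 Y1 X2 Y2 X3 Y3 = 0) by (rewrite <- E'; ring).
  apply Rmult_integral in E2. destruct E2; auto.
Qed.

Definition Ld (a b X Y X' Y' : R) := sqrt (a^2*(X'-X)^2 + b^2*(Y'-Y)^2).

Lemma chord (a b X Y X' Y' J : R) : 0 < a -> 0 < b ->
  X^2+Y^2 = 1 -> X'^2+Y'^2 = 1 -> ~(X = X' /\ Y = Y') ->
  1 - X*X' - Y*Y' = J * Ld a b X Y X' Y' ->
  (1 - (a^2+b^2)*J^2) + ((a^2-b^2)*J^2 - 1)*(X*X') + (-(a^2-b^2)*J^2 - 1)*(Y*Y') = 0.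
Proof.
  intros Ha Hb C C' D HJ.
  set (w := 1 - X*X' - Y*Y') in *.
  assert (Hw2 : 2*w = (X-X')^2 + (Y-Y')^2).
  { assert (E: 2*w - ((X-X')^2 + (Y-Y')^2) = -(X^2+Y^2-1) - (X'^2+Y'^2-1)) by (unfold w; ring).
    rewrite C, C' in E. lra. }
  assert (Hwp : 0 < w) by (assert (h := dist_pos X Y X' Y' D); lra).
  assert (HX : (X'-X)^2 = w*(1-X*X'+Y*Y')).
  { assert (E: (X'-X)^2 - w*(1-X*X'+Y*Y') = (X^2+Y^2-1)*Y'^2 + (X'^2+Y'^2-1)*(1-X^2)) by (unfold w; ring).
    rewrite C, C' in E. lra. }
  assert (HY : (Y'-Y)^2 = w*(1+X*X'-Y*Y')).
  { assert (E: (Y'-Y)^2 - w*(1+X*X'-Y*Y') = (X^2+Y^2-1)*X'^2 + (X'^2+Y'^2-1)*(1-Y^2)) by (unfold w; ring).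
    rewrite C, C' in E. lra. }
  assert (Hsq : w^2 = J^2 * (a^2*(X'-X)^2 + b^2*(Y'-Y)^2)).
  { rewrite HJ. unfold Ld. rewrite Rpow_mult_distr, pow2_sqrt; [ring|].
    assert (0 <= (X'-X)^2) by apply pow2_ge_0. assert (0 <= (Y'-Y)^2) by apply pow2_ge_0. nra. }
  rewrite HX, HY in Hsq.
  assert (Hw : w = J^2*(a^2*(1-X*X'+Y*Y') + b^2*(1+X*X'-Y*Y'))).
  { assert (E : w*(w - J^2*(a^2*(1-X*X'+Y*Y') + b^2*(1+X*X'-Y*Y'))) = 0).
    { replace (w*(w - J^2*(a^2*(1-X*X'+Y*Y') + b^2*(1+X*X'-Y*Y')))) with
        (w^2 - J^2 * (a^2 * (w * (1 - X * X' + Y * Y')) + b^2 * (w * (1 + X * X' - Y * Y')))) by ring.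
      rewrite Hsq. ring. }
    apply Rmult_integral in E. destruct E; lra. }
  unfold w in Hw.
  replace ((1 - (a^2+b^2)*J^2) + ((a^2-b^2)*J^2 - 1)*(X*X') + (-(a^2-b^2)*J^2 - 1)*(Y*Y')) with
    ((1 - X*X' - Y*Y') - J^2*(a^2*(1-X*X'+Y*Y') + b^2*(1+X*X'-Y*Y'))) by ring.
  rewrite <- Hw. ring.
Qed.

Definition KEYP (a c u X1 Y1 X2 Y2 X3 Y3 : R) : Prop :=
  2*a^8*(a^2-c^2)^2 * Tf a c X1 Y1 X2 Y2 X3 Y3 * Tf a (-c) X1 Y1 X2 Y2 X3 Y3
  = Kf (a^2) (a^2-c^2) ((a^2-c^2)+u*c^2) *
    ((a^2-c^2*X1^2)*(a^2-c^2*X2^2)*(a^2-c^2*X3^2))^2.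

Lemma param (X Y : R) : X^2+Y^2 = 1 -> X <> -1 -> exists t, X = cx t /\ Y = cy t.
Proof.
  intros C H. exists (Y/(1+X)).
  assert (H1 : 1 + X <> 0) by lra.
  assert (HY : Y^2 = 1 - X^2) by lra.
  assert (Ht : (Y/(1+X))^2 = (1-X)/(1+X)).
  { replace ((Y/(1+X))^2) with (Y^2/(1+X)^2) by (field; auto). rewrite HY. field. auto. }
  unfold cx, cy. rewrite Ht. split; field; split; auto; lra.
Qed.

Lemma key_A (a c u X1 Y1 X2 Y2 X3 Y3 : R) :
  0 < a -> 0 < c -> u <> 0 -> 2*u-1 <> 0 -> 1-u <> 0 ->
  a^2 = c^2*u*(2-u)/(2*u-1) ->
  X1^2+Y1^2 = 1 -> X2^2+Y2^2 = 1 -> X3^2+Y3^2 = 1 ->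
  X1 <> -1 -> X2 <> -1 -> X3 <> -1 ->
  u*(1-u) + (1-u)*(X1*X2) + u*(Y1*Y2) = 0 ->
  u*(1-u) + (1-u)*(X2*X3) + u*(Y2*Y3) = 0 ->
  ~(X1 = X3 /\ Y1 = Y3) ->
  KEYP a c u X1 Y1 X2 Y2 X3 Y3.
Proof.
  intros Ha Hc Hu0 Hu1 Hu2 Ha2 C1 C2 C3 N1 N2 N3 R12 R23 D13.
  destruct (param X1 Y1 C1 N1) as [t1 [-> ->]].
  destruct (param X2 Y2 C2 N2) as [t2 [-> ->]].
  destruct (param X3 Y3 C3 N3) as [t3 [-> ->]].
  unfold KEYP. apply key_tt; auto.
  intro e. apply D13. subst. auto.
Qed.

Lemma opp_end (u X Y X' Y' : R) :
  X^2+Y^2 = 1 -> X'^2+Y'^2 = 1 -> 1-u <> 0 ->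
  u*(1-u) + (1-u)*(X*X') + u*(Y*Y') = 0 -> X = -1 -> X' <> 1.
Proof.
  intros C C' Hu R e e'. subst.
  assert (HY : Y*Y = 0) by nra. assert (HY' : Y'*Y' = 0) by nra.
  apply Rmult_integral in HY. destruct HY as [HY|HY]; subst;
  apply Hu; nra.
Qed.

Lemma Tf_refl (a s X1 Y1 X2 Y2 X3 Y3 : R) :
  Tf a s (-X1) Y1 (-X2) Y2 (-X3) Y3 = - Tf a (-s) X1 Y1 X2 Y2 X3 Y3.
Proof. unfold Tf. ring. Qed.

Lemma key_XY (a c u X1 Y1 X2 Y2 X3 Y3 : R) :
  0 < a -> 0 < c -> u <> 0 -> 2*u-1 <> 0 -> 1-u <> 0 ->
  a^2 = c^2*u*(2-u)/(2*u-1) ->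
  X1^2+Y1^2 = 1 -> X2^2+Y2^2 = 1 -> X3^2+Y3^2 = 1 ->
  u*(1-u) + (1-u)*(X1*X2) + u*(Y1*Y2) = 0 ->
  u*(1-u) + (1-u)*(X2*X3) + u*(Y2*Y3) = 0 ->
  u*(1-u) + (1-u)*(X3*X1) + u*(Y3*Y1) = 0 ->
  ~(X1 = X3 /\ Y1 = Y3) ->
  KEYP a c u X1 Y1 X2 Y2 X3 Y3.
Proof.
  intros Ha Hc Hu0 Hu1 Hu2 Ha2 C1 C2 C3 R12 R23 R31 D13.
  assert (R21 : u*(1-u) + (1-u)*(X2*X1) + u*(Y2*Y1) = 0) by (rewrite <- R12; ring).
  assert (R32 : u*(1-u) + (1-u)*(X3*X2) + u*(Y3*Y2) = 0) by (rewrite <- R23; ring).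
  assert (R13 : u*(1-u) + (1-u)*(X1*X3) + u*(Y1*Y3) = 0) by (rewrite <- R31; ring).
  destruct (Req_dec X1 (-1)) as [e1|e1];
  [|destruct (Req_dec X2 (-1)) as [e2|e2];
    [|destruct (Req_dec X3 (-1)) as [e3|e3]; [|apply key_A; auto]]].
  all: cycle 1.
  (* reflected cases *)
  all: try (
    assert (M1 : X1 <> 1) by (first [apply (opp_end u X2 Y2 X1 Y1); now auto
                                    | apply (opp_end u X3 Y3 X1 Y1); now auto
                                    | lra]);
    assert (M2 : X2 <> 1) by (first [apply (opp_end u X1 Y1 X2 Y2); now auto
                                    | apply (opp_end u X3 Y3 X2 Y2); now auto
                                    | lra]);
    assert (M3 : X3 <> 1) by (first [apply (opp_end u X1 Y1 X3 Y3); now auto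
                                    | apply (opp_end u X2 Y2 X3 Y3); now auto
                                    | lra]);
    assert (K := key_A a c u (-X1) Y1 (-X2) Y2 (-X3) Y3 Ha Hc Hu0 Hu1 Hu2 Ha2
       ltac:(rewrite <- C1; ring) ltac:(rewrite <- C2; ring) ltac:(rewrite <- C3; ring)
       ltac:(lra) ltac:(lra) ltac:(lra)
       ltac:(rewrite <- R12; ring) ltac:(rewrite <- R23; ring)
       ltac:(intros [h h']; apply D13; split; [lra|auto]));
    unfold KEYP in *; rewrite !Tf_refl in K; rewrite Ropp_involutive in K;
    replace ((-X1)^2) with (X1^2) in K by ring;
    replace ((-X2)^2) with (X2^2) in K by ring;
    replace ((-X3)^2) with (X3^2) in K by ring;
    rewrite <- K; ring).
Qed.

Lemma Ld_sym (a b X Y X' Y' : R) : Ld a b X Y X' Y' = Ld a b X' Y' X Y.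
Proof. unfold Ld. f_equal. ring. Qed.

Lemma Ld_pos (a b X Y X' Y' : R) : 0 < a -> 0 < b -> ~(X = X' /\ Y = Y') -> 0 < Ld a b X Y X' Y'.
Proof.
  intros Ha Hb D. unfold Ld. apply sqrt_lt_R0.
  assert (h := dist_pos X Y X' Y' D).
  assert (h1 := pow2_ge_0 (X'-X)). assert (h2 := pow2_ge_0 (Y'-Y)).
  replace ((X'-X)^2) with ((X-X')^2) by ring. replace ((Y'-Y)^2) with ((Y-Y')^2) by ring.
  replace ((X'-X)^2) with ((X-X')^2) in h1 by ring. replace ((Y'-Y)^2) with ((Y-Y')^2) in h2 by ring.
  assert (0 < a^2) by nra. assert (0 < b^2) by nra.
  destruct (Rle_lt_dec ((X-X')^2) 0); nra.
Qed.

Lemma bis_conv (a b X Y X' Y' X'' Y'' : R) : 0 < a -> 0 < b -> X^2+Y^2 = 1 ->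
  normal_bisects a b (a*X, b*Y) (a*X', b*Y') (a*X'', b*Y'') ->
  (1 - X*X' - Y*Y') / Ld a b X Y X' Y' = (1 - X*X'' - Y*Y'') / Ld a b X Y X'' Y''.
Proof.
  intros Ha Hb C H.
  unfold normal_bisects, Defs.dist, Defs.dot, ell_normal, psub in H; cbn [fst snd] in H.
  assert (N1 : a*X/a^2*(a*X'-a*X) + b*Y/b^2*(b*Y'-b*Y) = -(1 - X*X' - Y*Y')).
  { replace (a*X/a^2*(a*X'-a*X)) with (X*X'-X^2) by (field; lra).
    replace (b*Y/b^2*(b*Y'-b*Y)) with (Y*Y'-Y^2) by (field; lra). lra. }
  assert (N2 : a*X/a^2*(a*X''-a*X) + b*Y/b^2*(b*Y''-b*Y) = -(1 - X*X'' - Y*Y'')).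
  { replace (a*X/a^2*(a*X''-a*X)) with (X*X''-X^2) by (field; lra).
    replace (b*Y/b^2*(b*Y''-b*Y)) with (Y*Y''-Y^2) by (field; lra). lra. }
  rewrite N1, N2 in H.
  replace ((a*X'-a*X)*(a*X'-a*X) + (b*Y'-b*Y)*(b*Y'-b*Y)) with (a^2*(X'-X)^2 + b^2*(Y'-Y)^2) in H by ring.
  replace ((a*X''-a*X)*(a*X''-a*X) + (b*Y''-b*Y)*(b*Y''-b*Y)) with (a^2*(X''-X)^2 + b^2*(Y''-Y)^2) in H by ring.
  unfold Ld. rewrite !Ropp_div in H. apply Ropp_eq_compat in H. rewrite !Ropp_involutive in H. exact H.
Qed.

Lemma focal (a b sg X Y : R) : 0 < b -> b < a -> sg^2 = a^2 - b^2 -> X^2+Y^2 = 1 ->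
  Defs.dist (a*X, b*Y) (sg, 0) = a - sg*X /\ 0 < a - sg*X.
Proof.
  intros Hb Hab Hs C.
  assert (Hpos : 0 < a - sg*X).
  { assert (HX : X^2 <= 1) by (assert (h := pow2_ge_0 Y); lra).
    assert (h1 : (sg*X)^2 < a^2).
    { replace ((sg*X)^2) with (sg^2*X^2) by ring. rewrite Hs.
      assert (0 < b^2) by nra. assert (0 <= a^2 - b^2) by nra. nra. }
    destruct (Rlt_le_dec (sg*X) a) as [h|h]; [lra|].
    exfalso. assert (a^2 <= (sg*X)^2) by nra. lra. }
  split; auto.
  unfold Defs.dist, Defs.dot, psub. cbn [fst snd].
  replace ((a*X - sg)*(a*X - sg) + (b*Y - 0)*(b*Y - 0)) with ((a - sg*X)^2).
  - apply sqrt_pow2. lra.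
  - assert (HY : Y^2 = 1 - X^2) by lra.
    replace ((a*X - sg)*(a*X - sg) + (b*Y - 0)*(b*Y - 0)) with (a^2*X^2 - 2*a*sg*X + sg^2 + b^2*Y^2) by ring.
    assert (E1 : (a - sg*X)^2 = a^2 - 2*a*sg*X + sg^2*X^2) by ring.
    rewrite E1, HY, Hs. ring.
Qed.

Lemma inv_area (rho : R) (f P1 P2 P3 : pt) (d1 d2 d3 : R) :
  0 < d1 -> 0 < d2 -> 0 < d3 ->
  Defs.dist P1 f = d1 -> Defs.dist P2 f = d2 -> Defs.dist P3 f = d3 ->
  inversive_area rho f P1 P2 P3 =
  rho^4 * Rabs (d3^2 * cross (psub P1 f) (psub P2 f) + d1^2 * cross (psub P2 f) (psub P3 f)
                + d2^2 * cross (psub P3 f) (psub P1 f)) / (2*(d1^2*d2^2*d3^2)).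
Proof.
  intros h1 h2 h3 e1 e2 e3.
  unfold inversive_area, tri_area, invert. rewrite e1, e2, e3.
  destruct f as [f1 f2]; destruct P1 as [p1 q1]; destruct P2 as [p2 q2]; destruct P3 as [p3 q3].
  unfold cross, psub, padd, pscale; cbn [fst snd].
  match goal with |- Rabs ?E / 2 = rho^4 * Rabs ?S / _ =>
    replace E with ((rho^4/(d1^2*d2^2*d3^2)) * S) by (field; lra) end.
  rewrite Rabs_mult. rewrite (Rabs_right (rho^4/(d1^2*d2^2*d3^2))).
  - field. lra.
  - apply Rle_ge. unfold Rdiv. apply Rmult_le_pos.
    + replace (rho^4) with ((rho^2)^2) by ring. apply pow2_ge_0.
    + apply Rlt_le, Rinv_0_lt_compat.
      assert (0 < d1^2) by nra. assert (0 < d2^2) by nra. assert (0 < d3^2) by nra.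
      apply Rmult_lt_0_compat; [apply Rmult_lt_0_compat|]; auto.
Qed.

Lemma div_nz (x y : R) : x <> 0 -> y <> 0 -> x / y <> 0.
Proof. intros. unfold Rdiv. apply Rmult_integral_contrapositive_currified; [|apply Rinv_neq_0_compat]; auto. Qed.

Lemma u_facts (a b d k : R) : 0 < b -> b < a -> d^2 = a^4 - a^2*b^2 + b^4 -> 0 < d -> 0 <= k ->
  (a^2-b^2)^2*k^2 + 2*(a^2+b^2)*k - 3 = 0 ->
  let u := (d - b^2)/(a^2-b^2) in
  u <> 0 /\ 2*u-1 <> 0 /\ 1-u <> 0 /\
  a^2 = (a^2-b^2)*u*(2-u)/(2*u-1) /\
  1 - (a^2+b^2)*k = -2*u*(1-u) /\ (a^2-b^2)*k - 1 = -2*(1-u) /\ -(a^2-b^2)*k - 1 = -2*u /\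
  b^2 + u*(a^2-b^2) = d.
Proof.
  intros Hb Hab Hd Hd0 Hk Hq u.
  assert (HD : 0 < a^2 - b^2) by nra.
  assert (Hb2 : 0 < b^2) by nra.
  assert (Z : (a^2-b^2)^2*k + a^2 + b^2 = 2*d).
  { set (Z := (a^2-b^2)^2*k + a^2 + b^2).
    assert (HZ0 : 0 <= Z) by (unfold Z; assert (0 <= (a^2-b^2)^2) by apply pow2_ge_0; nra).
    assert (HZ : (Z - 2*d)*(Z + 2*d) = 0).
    { replace ((Z - 2*d)*(Z + 2*d)) with (Z^2 - 4*d^2) by ring. rewrite Hd.
      unfold Z. replace (((a^2-b^2)^2*k + a^2 + b^2)^2 - 4*(a^4 - a^2*b^2 + b^4))
        with ((a^2-b^2)^2*((a^2-b^2)^2*k^2 + 2*(a^2+b^2)*k - 3)) by ring.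
      rewrite Hq. ring. }
    apply Rmult_integral in HZ. destruct HZ; lra. }
  assert (Hkv : k = (2*d - a^2 - b^2)/(a^2-b^2)^2) by (field_simplify_eq; lra).
  assert (Hdb : b^2 < d).
  { assert (d^2 - (b^2)^2 = a^2*(a^2-b^2)) by (rewrite Hd; ring).
    assert (0 < a^2*(a^2-b^2)) by nra. nra. }
  assert (Hda : d < a^2).
  { assert ((a^2)^2 - d^2 = b^2*(a^2-b^2)) by (rewrite Hd; ring).
    assert (0 < b^2*(a^2-b^2)) by nra. nra. }
  assert (H2d : a^2 + b^2 < 2*d).
  { assert ((2*d)^2 - (a^2+b^2)^2 = 3*(a^2-b^2)^2) by (replace ((2*d)^2) with (4*d^2) by ring; rewrite Hd; ring).
    assert (0 < 3*(a^2-b^2)^2) by nra. nra. }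
  assert (Hu0 : u <> 0) by (unfold u; apply div_nz; lra).
  assert (Hu1 : 2*u - 1 = (2*d - a^2 - b^2)/(a^2-b^2)) by (unfold u; field; lra).
  assert (Hu2 : 1 - u = (a^2 - d)/(a^2-b^2)) by (unfold u; field; lra).
  assert (Hu1' : 2*u-1 <> 0) by (rewrite Hu1; apply div_nz; lra).
  assert (Hu2' : 1-u <> 0) by (rewrite Hu2; apply div_nz; lra).
  repeat split; auto.
  - apply (Rmult_eq_reg_r (2*u-1)); auto.
    replace ((a^2-b^2)*u*(2-u)/(2*u-1)*(2*u-1)) with ((a^2-b^2)*u*(2-u)) by (field; auto).
    unfold u. apply (Rmult_eq_reg_r (a^2-b^2)); [|lra].
    replace ((a^2-b^2)*((d-b^2)/(a^2-b^2))*(2-(d-b^2)/(a^2-b^2))*(a^2-b^2))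
      with ((d-b^2)*(2*(a^2-b^2)-(d-b^2))) by (field; lra).
    replace (a^2*(2*((d-b^2)/(a^2-b^2))-1)*(a^2-b^2)) with (a^2*(2*d - a^2 - b^2)) by (field; lra).
    replace ((d-b^2)*(2*(a^2-b^2)-(d-b^2))) with (2*a^2*d - d^2 - 2*a^2*b^2 + b^4) by ring.
    rewrite Hd. ring.
  - rewrite Hkv. unfold u. apply (Rmult_eq_reg_r ((a^2-b^2)^2)); [|nra].
    replace ((1 - (a^2+b^2)*((2*d - a^2 - b^2)/(a^2-b^2)^2))*(a^2-b^2)^2)
      with ((a^2-b^2)^2 - (a^2+b^2)*(2*d - a^2 - b^2)) by (field; lra).
    replace (-2*((d-b^2)/(a^2-b^2))*(1-(d-b^2)/(a^2-b^2))*(a^2-b^2)^2)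
      with (-2*(d-b^2)*(a^2-d)) by (field; lra).
    replace (-2*(d-b^2)*(a^2-d)) with (-2*(a^2+b^2)*d + 2*d^2 + 2*a^2*b^2) by ring.
    rewrite Hd. ring.
  - rewrite Hkv. unfold u. field. lra.
  - rewrite Hkv. unfold u. field. lra.
  - unfold u. field. lra.
Qed.

Lemma S_focus (a b sg X1 Y1 X2 Y2 X3 Y3 : R) :
  (a - sg*X3)^2 * cross (psub (a*X1, b*Y1) (sg, 0)) (psub (a*X2, b*Y2) (sg, 0))
  + (a - sg*X1)^2 * cross (psub (a*X2, b*Y2) (sg, 0)) (psub (a*X3, b*Y3) (sg, 0))
  + (a - sg*X2)^2 * cross (psub (a*X3, b*Y3) (sg, 0)) (psub (a*X1, b*Y1) (sg, 0))
  = b * Tf a sg X1 Y1 X2 Y2 X3 Y3.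
Proof. unfold cross, psub, Tf; cbn [fst snd]. ring. Qed.


Lemma sq_lt (a b : R) : 0 < b -> b < a -> b^2 < a^2.
Proof. intros. nra. Qed.

Lemma Kf_nonneg (A2 B2 d : R) : 0 <= A2 -> 0 <= B2 -> 0 <= d -> 0 <= Kf A2 B2 d.
Proof.
  intros. unfold Kf.
  assert (0 <= A2^2) by (apply pow_le; lra). assert (0 <= B2^2) by (apply pow_le; lra).
  assert (0 <= A2^3) by (apply pow_le; lra). assert (0 <= B2^3) by (apply pow_le; lra).
  assert (0 <= A2*B2) by (apply Rmult_le_pos; lra).
  assert (0 <= A2^2*B2) by (apply Rmult_le_pos; lra).
  assert (0 <= (A2^2 + 2*A2*B2 + 4*B2^2)*d) by (apply Rmult_le_pos; lra).
  lra.
Qed.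

Lemma pos8 (a b : R) : 0 < a -> 0 < b -> 0 < 2*a^8*b^2.
Proof. intros. assert (0 < a^8) by (apply pow_lt; lra). assert (0 < b^2) by (apply pow_lt; lra).
  apply Rmult_lt_0_compat; [apply Rmult_lt_0_compat|]; lra. Qed.

Theorem mainTheorem8 (a b rho : R) (P1 P2 P3 : pt) :
  0 < b -> b < a -> 0 < rho ->
  three_periodic a b P1 P2 P3 ->
  let delta := sqrt (a^4 - a^2 * b^2 + b^4) in
  inversive_area rho (focus1 a b) P1 P2 P3 * inversive_area rho (focus2 a b) P1 P2 P3
  = rho^8 / (8 * a^8 * b^2) *
    ((a^4 + 2 * a^2 * b^2 + 4 * b^4) * delta + a^6 + 3/2 * a^4 * b^2 + 4 * b^6).
Proof.
  intros Hb Hab Hr [D12 [D23 [D31 [E1 [E2 [E3 [B1 [B2 B3]]]]]]]] delta.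
  destruct P1 as [x1 y1]; destruct P2 as [x2 y2]; destruct P3 as [x3 y3].
  assert (Ha : 0 < a) by lra.
  set (X1 := x1/a). assert (Hx1 : x1 = a*X1) by (unfold X1; field; lra). clearbody X1. subst x1.
  set (X2 := x2/a). assert (Hx2 : x2 = a*X2) by (unfold X2; field; lra). clearbody X2. subst x2.
  set (X3 := x3/a). assert (Hx3 : x3 = a*X3) by (unfold X3; field; lra). clearbody X3. subst x3.
  set (Y1 := y1/b). assert (Hy1 : y1 = b*Y1) by (unfold Y1; field; lra). clearbody Y1. subst y1.
  set (Y2 := y2/b). assert (Hy2 : y2 = b*Y2) by (unfold Y2; field; lra). clearbody Y2. subst y2.
  set (Y3 := y3/b). assert (Hy3 : y3 = b*Y3) by (unfold Y3; field; lra). clearbody Y3. subst y3.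
  assert (C1 : X1^2+Y1^2 = 1).
  { unfold on_ellipse in E1; cbn [fst snd] in E1. rewrite <- E1. field. split; lra. }
  assert (C2 : X2^2+Y2^2 = 1).
  { unfold on_ellipse in E2; cbn [fst snd] in E2. rewrite <- E2. field. split; lra. }
  assert (C3 : X3^2+Y3^2 = 1).
  { unfold on_ellipse in E3; cbn [fst snd] in E3. rewrite <- E3. field. split; lra. }
  assert (N12 : ~(X1 = X2 /\ Y1 = Y2)) by (intros [e e']; apply D12; rewrite e, e'; reflexivity).
  assert (N23 : ~(X2 = X3 /\ Y2 = Y3)) by (intros [e e']; apply D23; rewrite e, e'; reflexivity).
  assert (N31 : ~(X3 = X1 /\ Y3 = Y1)) by (intros [e e']; apply D31; rewrite e, e'; reflexivity).
  assert (N13 : ~(X1 = X3 /\ Y1 = Y3)) by (intros [e e']; apply N31; auto).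
  pose proof (bis_conv a b X2 Y2 X1 Y1 X3 Y3 Ha Hb C2 B2) as G2.
  pose proof (bis_conv a b X3 Y3 X2 Y2 X1 Y1 Ha Hb C3 B3) as G3.
  assert (LP12 := Ld_pos a b X1 Y1 X2 Y2 Ha Hb N12).
  assert (LP23 := Ld_pos a b X2 Y2 X3 Y3 Ha Hb N23).
  assert (LP31 := Ld_pos a b X3 Y3 X1 Y1 Ha Hb N31).
  set (J := (1 - X1*X2 - Y1*Y2)/Ld a b X1 Y1 X2 Y2).
  assert (HJ12 : 1 - X1*X2 - Y1*Y2 = J * Ld a b X1 Y1 X2 Y2) by (unfold J; field; lra).
  rewrite (Ld_sym a b X2 Y2 X1 Y1) in G2.
  replace (1 - X2*X1 - Y2*Y1) with (1 - X1*X2 - Y1*Y2) in G2 by ring.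
  fold J in G2.
  assert (HJ23 : 1 - X2*X3 - Y2*Y3 = J * Ld a b X2 Y2 X3 Y3) by (rewrite G2; field; lra).
  rewrite (Ld_sym a b X3 Y3 X2 Y2) in G3.
  replace (1 - X3*X2 - Y3*Y2) with (1 - X2*X3 - Y2*Y3) in G3 by ring.
  assert (HJ31 : 1 - X3*X1 - Y3*Y1 = J * Ld a b X3 Y3 X1 Y1).
  { assert (HJ23' : (1 - X2*X3 - Y2*Y3)/Ld a b X2 Y2 X3 Y3 = J) by (rewrite HJ23; field; lra).
    rewrite HJ23' in G3. rewrite G3. field. lra. }
  pose proof (chord a b X1 Y1 X2 Y2 J Ha Hb C1 C2 N12 HJ12) as Rc12.
  pose proof (chord a b X2 Y2 X3 Y3 J Ha Hb C2 C3 N23 HJ23) as Rc23.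
  pose proof (chord a b X3 Y3 X1 Y1 J Ha Hb C3 C1 N31 HJ31) as Rc31.
  pose proof (det_nz X1 Y1 X2 Y2 X3 Y3 C1 C2 C3 N12 N23 N31) as Hdet.
  pose proof (cayley X1 Y1 X2 Y2 X3 Y3 (1 - (a^2+b^2)*J^2) ((a^2-b^2)*J^2 - 1) (-(a^2-b^2)*J^2 - 1)
                C1 C2 C3 Rc12 Rc23 Rc31 Hdet) as Cay.
  assert (Hq : (a^2-b^2)^2*(J^2)^2 + 2*(a^2+b^2)*J^2 - 3 = 0) by (rewrite <- Cay; ring).
  assert (Hpoly : 0 < a^4 - a^2*b^2 + b^4).
  { replace (a^4 - a^2*b^2 + b^4) with ((a^2 - b^2/2)^2 + 3/4*b^4) by field.
    assert (0 < b^4) by (apply pow_lt; lra). assert (h := pow2_ge_0 (a^2-b^2/2)). lra. }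
  assert (Hdel2 : delta^2 = a^4 - a^2*b^2 + b^4) by (unfold delta; apply pow2_sqrt; lra).
  assert (Hdel0 : 0 < delta) by (unfold delta; apply sqrt_lt_R0; lra).
  destruct (u_facts a b delta (J^2) Hb Hab Hdel2 Hdel0 (pow2_ge_0 J) Hq)
    as [Hu0 [Hu1 [Hu2 [Ha2 [Hs [HA [HB Hdl]]]]]]].
  set (u := (delta - b^2)/(a^2-b^2)) in *.
  rewrite Hs, HA, HB in Rc12, Rc23, Rc31.
  assert (Rk12 : u*(1-u) + (1-u)*(X1*X2) + u*(Y1*Y2) = 0).
  { replace (u*(1-u) + (1-u)*(X1*X2) + u*(Y1*Y2)) with
      (-(1/2)*(-2*u*(1-u) + -2*(1-u)*(X1*X2) + -2*u*(Y1*Y2))) by field.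
    rewrite Rc12. ring. }
  assert (Rk23 : u*(1-u) + (1-u)*(X2*X3) + u*(Y2*Y3) = 0).
  { replace (u*(1-u) + (1-u)*(X2*X3) + u*(Y2*Y3)) with
      (-(1/2)*(-2*u*(1-u) + -2*(1-u)*(X2*X3) + -2*u*(Y2*Y3))) by field.
    rewrite Rc23. ring. }
  assert (Rk31 : u*(1-u) + (1-u)*(X3*X1) + u*(Y3*Y1) = 0).
  { replace (u*(1-u) + (1-u)*(X3*X1) + u*(Y3*Y1)) with
      (-(1/2)*(-2*u*(1-u) + -2*(1-u)*(X3*X1) + -2*u*(Y3*Y1))) by field.
    rewrite Rc31. ring. }
  assert (Hab3 := sq_lt a b Hb Hab).
  assert (Hab2 : 0 <= a^2 - b^2) by lra.
  set (c := sqrt (a^2 - b^2)).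
  assert (Hc2 : c^2 = a^2 - b^2) by (unfold c; apply pow2_sqrt; lra).
  assert (Hc : 0 < c) by (unfold c; apply sqrt_lt_R0; lra).
  assert (Ha2' : a^2 = c^2*u*(2-u)/(2*u-1)) by (rewrite Hc2; exact Ha2).
  pose proof (key_XY a c u X1 Y1 X2 Y2 X3 Y3 Ha Hc Hu0 Hu1 Hu2 Ha2' C1 C2 C3 Rk12 Rk23 Rk31 N13) as Key.
  unfold KEYP in Key.
  replace (a^2-c^2) with (b^2) in Key by lra.
  replace (b^2 + u*c^2) with delta in Key by (rewrite Hc2; symmetry; exact Hdl).
  unfold focus1, focus2. change (sqrt (a^2 - b^2)) with c.
  assert (Hmc2 : (-c)^2 = a^2 - b^2) by (rewrite <- Hc2; ring).
  destruct (focal a b (-c) X1 Y1 Hb Hab Hmc2 C1) as [F11 P11].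
  destruct (focal a b (-c) X2 Y2 Hb Hab Hmc2 C2) as [F12 P12].
  destruct (focal a b (-c) X3 Y3 Hb Hab Hmc2 C3) as [F13 P13].
  destruct (focal a b c X1 Y1 Hb Hab Hc2 C1) as [F21 P21].
  destruct (focal a b c X2 Y2 Hb Hab Hc2 C2) as [F22 P22].
  destruct (focal a b c X3 Y3 Hb Hab Hc2 C3) as [F23 P23].
  rewrite (inv_area rho (-c, 0) _ _ _ _ _ _ P11 P12 P13 F11 F12 F13).
  rewrite (inv_area rho (c, 0) _ _ _ _ _ _ P21 P22 P23 F21 F22 F23).
  rewrite !S_focus.
  set (T1 := Tf a (-c) X1 Y1 X2 Y2 X3 Y3) in *.
  set (T2 := Tf a c X1 Y1 X2 Y2 X3 Y3) in *.
  set (PP := (a^2 - c^2*X1^2)*(a^2 - c^2*X2^2)*(a^2 - c^2*X3^2)) in *.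
  assert (HK : 0 <= Kf (a^2) (b^2) delta).
  { apply Kf_nonneg; [apply pow_le; lra|apply pow_le; lra|lra]. }
  assert (H8 := pos8 a b Ha Hb).
  assert (HT : (b*T1)*(b*T2) = Kf (a^2) (b^2) delta * PP^2 / (2*a^8*b^2)).
  { apply (Rmult_eq_reg_l (2*a^8*b^2)).
    - rewrite <- Key. field. lra.
    - lra. }
  assert (HT0 : 0 <= (b*T1)*(b*T2)).
  { rewrite HT. unfold Rdiv. apply Rmult_le_pos.
    - apply Rmult_le_pos; auto. apply pow2_ge_0.
    - apply Rlt_le, Rinv_0_lt_compat. lra. }
  transitivity (rho^8 * (Rabs (b*T1) * Rabs (b*T2)) /
     (4*(((a - -c*X1)^2*(a - -c*X2)^2*(a - -c*X3)^2)*((a - c*X1)^2*(a - c*X2)^2*(a - c*X3)^2)))).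
  { field. repeat split; lra. }
  rewrite <- Rabs_mult, (Rabs_right _ (Rle_ge _ _ HT0)), HT.
  unfold PP, Kf. field. repeat split; lra.
Qed.
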